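(* Let $n\ge2$, let $T$ be any representation of $U'_q(\mathrm{so}_n)$ on a complex vector space $\mathcal V$ with basis $\{v_\alpha\}$, and let $\mathcal V_{\mathbf 1}$ be an $n$-dimensional space with basis $v_1,\dots,v_n$. Then the linear maps $T^\otimes(I_{j,j-1})$, $j=2,\dots,n$, on $\mathcal V^\otimes=\mathcal V_{\mathbf 1}\otimes\mathcal V$ given by $$T^\otimes(I_{j,j-1})(v_{j-1}\otimes v_\alpha)=q\,v_{j-1}\otimes T(I_{j,j-1})v_\alpha-q^{1/2}\,v_j\otimes v_\alpha,$$ $$T^\otimes(I_{j,j-1})(v_{j}\otimes v_\alpha)=q^{-1}\,v_{j}\otimes T(I_{j,j-1})v_\alpha+q^{-1/2}\,v_{j-1}\otimes v_\alpha,$$ $$T^\otimes(I_{j,j-1})(v_k\otimes v_\alpha)=v_k\otimes T(I_{j,j-1})v_\alpha\quad (k\ne j,\ k\ne j-1),$$ define a representation $T^\otimes$ of $U'_q(\mathrm{so}_n)$ on $\mathcal V^\otimes$.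
   Context: Fix $q\in\mathbb{C}$, $q\ne0,\pm1$, not a root of unity, and a square root $q^{1/2}$. The algebra $U'_q(\mathrm{so}_n)$ is the unital complex associative algebra generated by $I_{21},I_{32},\dots,I_{n,n-1}$ with relations $I_{j,j-1}^2I_{j-1,j-2}+I_{j-1,j-2}I_{j,j-1}^2-(q+q^{-1})I_{j,j-1}I_{j-1,j-2}I_{j,j-1}=-I_{j-1,j-2}$, $I_{j-1,j-2}^2I_{j,j-1}+I_{j,j-1}I_{j-1,j-2}^2-(q+q^{-1})I_{j-1,j-2}I_{j,j-1}I_{j-1,j-2}=-I_{j,j-1}$, and $[I_{i,i-1},I_{j,j-1}]=0$ if $|i-j|>1$. A representation is an algebra homomorphism into the endomorphisms of the space (determined by the images of the generators). *)

(* Defs.v *)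
From mathcomp Require Import all_boot all_algebra.
From mathcomp Require Import Rstruct complex.
Set Implicit Arguments. Unset Strict Implicit. Unset Printing Implicit Defensive.
Import GRing.Theory.
Local Open Scope ring_scope.

Notation Cplx := (Rdefinitions.R[i]).

Definition q_generic (q : Cplx) : Prop :=
  [/\ q != 0, q != 1, q != -1 & forall k : nat, (0 < k)%N -> q ^+ k != 1].

(* A representation of U'_q(so_n) on the complex vector space V:
   T j is the image of the generator I_{j,j-1} (2 <= j <= n); these must be
   linear maps satisfying the defining relations of U'_q(so_n)
   (operator product I I' read as composition). *)
Definition is_rep_Uqso (V : lmodType Cplx) (n : nat) (q : Cplx)
    (T : nat -> V -> V) : Prop :=
  [/\ (forall j, (2 <= j <= n)%N ->
         forall (a : Cplx) (u v : V), T j (a *: u + v) = a *: T j u + T j v),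
      (forall j, (3 <= j <= n)%N -> forall v : V,
         T j (T j (T j.-1 v)) + T j.-1 (T j (T j v))
           - (q + q^-1) *: T j (T j.-1 (T j v)) = - T j.-1 v),
      (forall j, (3 <= j <= n)%N -> forall v : V,
         T j.-1 (T j.-1 (T j v)) + T j (T j.-1 (T j.-1 v))
           - (q + q^-1) *: T j.-1 (T j (T j.-1 v)) = - T j v)
    & (forall i j, (2 <= i <= n)%N -> (2 <= j <= n)%N -> (j.+1 < i)%N ->
         forall v : V, T i (T j v) = T j (T i v))].

(* The tensor product V_1 (x) V, with V_1 having basis v_1, ..., v_n, is
   identified with V^n = {ffun 'I_n -> V} via  sum_k v_{k+1} (x) w k  <-> w.
   [comp w m] is the V-component of w along the basis vector v_{m+1}
   (0 if m >= n). *)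
Definition comp (V : lmodType Cplx) (n : nat) (w : {ffun 'I_n -> V}) (m : nat) : V :=
  match (insub m : option 'I_n) with Some k => w k | None => 0 end.

(* T^(x)(I_{j,j-1}) on V_1 (x) V, with s = q^{1/2}: the linear extension of
     v_{j-1} (x) x |-> q v_{j-1} (x) T x - s v_j (x) x,
     v_j     (x) x |-> q^-1 v_j (x) T x + s^-1 v_{j-1} (x) x,
     v_k     (x) x |-> v_k (x) T x  (k <> j-1, j).
   Component along v_{k+1} (k : 'I_n, 0-based). *)
Definition tensor_op (V : lmodType Cplx) (n : nat) (q s : Cplx)
    (T : nat -> V -> V) (j : nat) (w : {ffun 'I_n -> V}) : {ffun 'I_n -> V} :=
  [ffun k : 'I_n =>
     if k.+1 == j.-1 then q *: T j (w k) + s^-1 *: comp w j.-1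
     else if k.+1 == j then q^-1 *: T j (w k) - s *: comp w j.-2
     else T j (w k)].

(* Main.v *)
From Pilot Require Import Defs.
From mathcomp Require Import all_boot all_algebra.
From mathcomp Require Import Rstruct complex.
Local Open Scope ring_scope.
From Stdlib Require Import Ring_theory Ring FunctionalExtensionality.
From mathcomp Require Import zify.
Set Implicit Arguments. Unset Strict Implicit. Unset Printing Implicit Defensive.
Import GRing.Theory.
Local Open Scope ring_scope.

Section Z.
Variable V : lmodType Cplx.
Definition Zt := (Cplx * V)%type.
Definition zadd (x y : Zt) : Zt := (x.1 + y.1, x.2 + y.2).
Definition zopp (x : Zt) : Zt := (- x.1, - x.2).
Definition zmul (x y : Zt) : Zt := (x.1 * y.1, x.1 *: y.2 + y.1 *: x.2).
Definition zone : Zt := (1, 0).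
Definition zzero : Zt := (0, 0).
Definition zsub x y := zadd x (zopp y).
Lemma Z_rt : ring_theory zzero zone zadd zmul zsub zopp (@eq Zt).
Proof.
split.
- by case=> a u; rewrite /zadd /= !add0r.
- by case=> a u [b v]; rewrite /zadd /= addrC (addrC u).
- by case=> a u [b v] [c w]; rewrite /zadd /= !addrA.
- by case=> a u; rewrite /zmul /= mul1r scale1r scaler0 addr0.
- by case=> a u [b v]; rewrite /zmul /= mulrC addrC.
- case=> a u [b v] [c w]; rewrite /zmul /= mulrA; congr pair.
  by rewrite !scalerDr !scalerA addrA (mulrC c a) (mulrC c b) (addrC (_ *: w)).
- case=> a u [b v] [c w]; rewrite /zmul /zadd /= mulrDl; congr pair.
  by rewrite scalerDl scalerDr addrACA.
- by [].
- by case=> a u; rewrite /zadd /zopp /= !subrr.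
Qed.
Add Ring Zr : Z_rt.
Definition kap (c : Cplx) : Zt := (c, 0).
Definition io (u : V) : Zt := (0, u).
Lemma ioD u v : io (u + v) = zadd (io u) (io v). Proof. by rewrite /io /zadd /= addr0. Qed.
Lemma ioN u : io (- u) = zopp (io u). Proof. by rewrite /io /zopp /= oppr0. Qed.
Lemma ioZ c u : io (c *: u) = zmul (kap c) (io u).
Proof. by rewrite /io /zmul /kap /= mulr0 scaler0 addr0. Qed.
Lemma io0 : io 0 = zzero. Proof. by []. Qed.
Lemma kapD a b : kap (a + b) = zadd (kap a) (kap b). Proof. by rewrite /kap /zadd /= addr0. Qed.
Lemma kapN a : kap (- a) = zopp (kap a). Proof. by rewrite /kap /zopp /= oppr0. Qed.
Lemma kapM a b : kap (a * b) = zmul (kap a) (kap b).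
Proof. by rewrite /kap /zmul /= !scaler0 addr0. Qed.
Lemma kap1 : kap 1 = zone. Proof. by []. Qed.
Lemma io_inj : injective io. Proof. by move=> x y [->]. Qed.

Goal forall a b : Zt, zmul a b = zone -> zmul (zmul a a) b = a.
move=> a b h. ring [h]. Qed.
Goal forall a b : Cplx, zmul (kap a) (kap b) = zone -> zmul (zmul (kap a) (kap a)) (kap b) = kap a.
move=> a b h. ring [h]. Qed.
Goal forall a : Cplx, zmul (kap a) (kap a^-1) = zone -> zmul (zmul (kap a) (kap a)) (kap a^-1) = kap a.
move=> a h. ring [h]. Qed.
Goal forall (a : Cplx) (x : V), zmul (kap a) (kap a^-1) = zone -> zmul (zmul (kap a) (kap a^-1)) (io x) = io x.
move=> a x h. ring [h]. Qed.
Goal forall (a : Cplx) (x : V), zmul (kap a) (kap a^-1) = zone -> zadd (zmul (zmul (kap a) (kap a^-1)) (io x)) (zopp (io x)) = zzero.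
move=> a x h. ring [h]. Qed.
End Z.

Notation comp := Pilot.Defs.comp.
Section Main.
Variables (n : nat) (q s : Cplx) (V : lmodType Cplx) (T : nat -> V -> V).
Hypothesis hs : s ^+ 2 = q.
Hypothesis hq : q != 0.
Hypothesis lin : forall j, (2 <= j <= n)%N ->
         forall (a : Cplx) (u v : V), T j (a *: u + v) = a *: T j u + T j v.

Lemma s0 : s != 0.
Proof. apply: contra hq => /eqP s0; by rewrite -hs s0 expr0n. Qed.
Lemma ssV : s * s^-1 = 1. Proof. by rewrite mulfV ?s0. Qed.
Lemma qE : q = s * s. Proof. by rewrite -hs expr2. Qed.
Lemma qVE : q^-1 = s^-1 * s^-1. Proof. by rewrite qE invfM. Qed.

Section Lin.
Variable j : nat.
Hypothesis hj : (2 <= j <= n)%N.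
Lemma T0 : T j 0 = 0.
Proof. have := lin hj 1 0 0. rewrite !scale1r !addr0 => h. apply: (@addrI _ (T j 0)). by rewrite addr0 -h. Qed.
Lemma TD u v : T j (u + v) = T j u + T j v.
Proof. by rewrite -[u]scale1r lin // !scale1r. Qed.
Lemma TZ a u : T j (a *: u) = a *: T j u.
Proof. by rewrite -[a *: u]addr0 lin // T0 addr0. Qed.
Lemma TN u : T j (- u) = - T j u.
Proof. by rewrite -scaleN1r TZ scaleN1r. Qed.
End Lin.

Lemma compD (w1 w2 : {ffun 'I_n -> V}) m : comp (w1 + w2) m = comp w1 m + comp w2 m.
Proof. rewrite /comp; case: insub => [k|]; last by rewrite addr0. by rewrite /= ffunE. Qed.
Lemma compN (w : {ffun 'I_n -> V}) m : comp (- w) m = - comp w m.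
Proof. rewrite /comp; case: insub => [k|]; last by rewrite oppr0. by rewrite /= ffunE. Qed.
Lemma compZ a (w : {ffun 'I_n -> V}) m : comp (a *: w) m = a *: comp w m.
Proof. rewrite /comp; case: insub => [k|]; last by rewrite scaler0. by rewrite /= ffunE. Qed.
Lemma comp_ext (w1 w2 : {ffun 'I_n -> V}) : (forall m, comp w1 m = comp w2 m) -> w1 = w2.
Proof. move=> h; apply/ffunP => k; have := h k; by rewrite /comp valK. Qed.

Definition G j (F : nat -> V) m :=
  if m.+1 == j.-1 then q *: T j (F m) + s^-1 *: F j.-1
  else if m.+1 == j then q^-1 *: T j (F m) - s *: F j.-2
  else T j (F m).

Lemma comp_tensor j (w : {ffun 'I_n -> V}) : (2 <= j <= n)%N -> comp (tensor_op q s T j w) = G j (comp w).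
Proof.
move=> hj; apply: functional_extensionality => m.
rewrite /G /comp; case: insubP => [k km <-|].
  by rewrite ffunE.
rewrite -leqNgt => nm.
have h1 : (m.+1 == j.-1) = false by apply/negbTE; lia.
have h2 : (m.+1 == j) = false by apply/negbTE; lia.
by rewrite h1 h2 T0.
Qed.

Lemma GA j F m : m.+1 = j.-1 -> G j F m = q *: T j (F m) + s^-1 *: F j.-1.
Proof. by move=> h; rewrite /G h eqxx. Qed.
Lemma GB j F m : m.+1 = j -> G j F m = q^-1 *: T j (F m) - s *: F j.-2.
Proof. move=> h; rewrite /G h eqxx; case: eqP => //; lia. Qed.
Lemma GC j F m : m.+1 != j.-1 -> m.+1 != j -> G j F m = T j (F m).
Proof. by move=> h1 h2; rewrite /G (negbTE h1) (negbTE h2). Qed.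

Add Ring ZrV : (Z_rt V).
Lemma hZ : zmul (kap V s) (kap V s^-1) = zone V.
Proof. by rewrite -kapM ssV. Qed.

Ltac Gsimp := repeat match goal with |- context [G ?j ?F ?m] =>
  first [ rewrite (@GA j F m); last by lia | rewrite (@GB j F m); last by lia
        | rewrite (@GC j F m); [| by lia | by lia] ] end.

Ltac zsolve := apply: io_inj; rewrite ?(ioD, ioN, ioZ, io0) ?qVE ?qE ?(kapD, kapM, kapN, kap1);
  ring [hZ].

Lemma rel1 j (w : {ffun 'I_n -> V}) : (3 <= j <= n)%N ->
  (forall v : V, T j (T j (T j.-1 v)) + T j.-1 (T j (T j v))
           - (q + q^-1) *: T j (T j.-1 (T j v)) = - T j.-1 v) ->
  tensor_op q s T j (tensor_op q s T j (tensor_op q s T j.-1 w)) + tensor_op q s T j.-1 (tensor_op q s T j (tensor_op q s T j w))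
           - (q + q^-1) *: tensor_op q s T j (tensor_op q s T j.-1 (tensor_op q s T j w)) = - tensor_op q s T j.-1 w.
Proof.
case: j => [|[|[|i]]] //= hj R.
have h3 : (2 <= i.+3 <= n)%N by lia.
have h2 : (2 <= i.+2 <= n)%N by lia.
have R' : forall v, T i.+2 (T i.+3 (T i.+3 v)) = - T i.+2 v - T i.+3 (T i.+3 (T i.+2 v)) + (q + q^-1) *: T i.+3 (T i.+2 (T i.+3 v)).
  by move=> v; rewrite -(R v); zsolve.
apply: comp_ext => m.
rewrite !compD !compN !compZ !comp_tensor //.
have [->|] := eqVneq m i; [|have [->|] := eqVneq m i.+1; [| have [->|] := eqVneq m i.+2]].
- Gsimp; rewrite ?succnK ?(TD h3, TD h2, TZ h3, TZ h2, TN h3, TN h2) ?R'; zsolve.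
- move=> ?; Gsimp; rewrite ?succnK ?(TD h3, TD h2, TZ h3, TZ h2, TN h3, TN h2) ?R'; zsolve.
- move=> ? ?; Gsimp; rewrite ?succnK ?(TD h3, TD h2, TZ h3, TZ h2, TN h3, TN h2) ?R'; zsolve.
- move=> ? ? ?; Gsimp; exact: R.
Qed.

Lemma rel2 j (w : {ffun 'I_n -> V}) : (3 <= j <= n)%N ->
  (forall v : V, T j.-1 (T j.-1 (T j v)) + T j (T j.-1 (T j.-1 v))
           - (q + q^-1) *: T j.-1 (T j (T j.-1 v)) = - T j v) ->
  tensor_op q s T j.-1 (tensor_op q s T j.-1 (tensor_op q s T j w)) + tensor_op q s T j (tensor_op q s T j.-1 (tensor_op q s T j.-1 w))
           - (q + q^-1) *: tensor_op q s T j.-1 (tensor_op q s T j (tensor_op q s T j.-1 w)) = - tensor_op q s T j w.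
Proof.
case: j => [|[|[|i]]] //= hj R.
have h3 : (2 <= i.+3 <= n)%N by lia.
have h2 : (2 <= i.+2 <= n)%N by lia.
have R' : forall v, T i.+3 (T i.+2 (T i.+2 v)) = - T i.+3 v - T i.+2 (T i.+2 (T i.+3 v)) + (q + q^-1) *: T i.+2 (T i.+3 (T i.+2 v)).
  by move=> v; rewrite -(R v); zsolve.
apply: comp_ext => m.
rewrite !compD !compN !compZ !comp_tensor //.
have [->|] := eqVneq m i; [|have [->|] := eqVneq m i.+1; [| have [->|] := eqVneq m i.+2]].
- Gsimp; rewrite ?succnK ?(TD h3, TD h2, TZ h3, TZ h2, TN h3, TN h2) ?R'; zsolve.
- move=> ?; Gsimp; rewrite ?succnK ?(TD h3, TD h2, TZ h3, TZ h2, TN h3, TN h2) ?R'; zsolve.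
- move=> ? ?; Gsimp; rewrite ?succnK ?(TD h3, TD h2, TZ h3, TZ h2, TN h3, TN h2) ?R'; zsolve.
- move=> ? ? ?; Gsimp; exact: R.
Qed.

Lemma relc i j (w : {ffun 'I_n -> V}) : (2 <= i <= n)%N -> (2 <= j <= n)%N -> (j.+1 < i)%N ->
  (forall v : V, T i (T j v) = T j (T i v)) ->
  tensor_op q s T i (tensor_op q s T j w) = tensor_op q s T j (tensor_op q s T i w).
Proof.
move=> hi hj hji R.
apply: comp_ext => m.
rewrite !comp_tensor //.
case: (boolP (m.+1 == i.-1)) => ?; [|case: (boolP (m.+1 == i)) => ?];
  [| |case: (boolP (m.+1 == j.-1)) => ?; [|case: (boolP (m.+1 == j)) => ?]];
  Gsimp; rewrite ?(TD hi, TD hj, TZ hi, TZ hj, TN hi, TN hj) ?R //; zsolve.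
Qed.

Lemma tlin j : (2 <= j <= n)%N -> forall (a : Cplx) (u v : {ffun 'I_n -> V}),
  tensor_op q s T j (a *: u + v) = a *: tensor_op q s T j u + tensor_op q s T j v.
Proof.
move=> hj a u v; apply: comp_ext => m.
rewrite compD compZ !comp_tensor //.
have -> : comp (a *: u + v) = fun k => a *: comp u k + comp v k.
  by apply: functional_extensionality => k; rewrite compD compZ.
rewrite /G; case: ifP => _; [|case: ifP => _]; rewrite ?(TD hj, TZ hj, TN hj); zsolve.
Qed.
End Main.

Unset Implicit Arguments.

Theorem proposition2 (n : nat) (q s : Cplx) (V : lmodType Cplx)
    (T : nat -> V -> V) :
  (2 <= n)%N -> q_generic q -> s ^+ 2 = q ->
  is_rep_Uqso n q T ->
  is_rep_Uqso n q (@tensor_op V n q s T).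
Proof.
move=> hn [hq _ _ _] hs [L R1 R2 Rc]; split.
- move=> j hj a u v; by eapply tlin; eauto.
- move=> j hj w; by eapply rel1; eauto.
- move=> j hj w; by eapply rel2; eauto.
- move=> i j hi hj hji w; by eapply relc; eauto.
Qed.
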